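(* In the UDoG template described in the context, for any $t\ge0$ and any $\rho_t>0$, \[ \bar r_t\alpha_t\langle g_t,x_{t+1}-x^\star\rangle\le\frac{\bar r_t^2\alpha_t^2\rho_t}{2}\|g_t-m_t\|^2-\frac1{2\rho_t}\|x_{t+1}-y_t\|^2+\left(\frac1{2\rho_t}-\frac{\sqrt{\Gamma^x_t}}{2}\right)\left(\|x_{t+1}-y_t\|^2+\|x_{t+1}-y_{t+1}\|^2\right)+\frac{\sqrt{\Gamma^y_t}}{2}\left(\|y_t-x^\star\|^2-\|y_{t+1}-x^\star\|^2\right). \]
   Context: Norms are Euclidean, $\Pi_{\mathcal K}$ is Euclidean projection. $\mathcal K\subseteq\mathbb{R}^n$ closed convex, $f:\mathcal K\to\mathbb R$ convex with minimizer $x^\star$, and $\mathcal O$ a stochastic gradient oracle (any random vectors $m_t,g_t$ below). UDoG template: given $x_0\in\mathcal K$, $r_\epsilon>0$, set $y_0=x_0$; for $t=0,1,\dots$: $\bar r_t=\max_{k\le t}\max\{\|y_k-x_0\|,\|x_k-x_0\|,r_\epsilon\}$, $\alpha_t=\sum_{k=0}^t\bar r_k/\bar r_t$, $w_t=\alpha_t\bar r_t$; $\bar z_t=\frac{w_ty_t+\sum_{k=0}^{t-1}w_kx_{k+1}}{\sum_{k=0}^tw_k}$, $m_t\sim\mathcal O(\bar z_t)$, $x_{t+1}=\Pi_{\mathcal K}(y_t-\alpha_t\eta_{x,t}m_t)$; $\bar x_t=\frac{\sum_{k=0}^tw_kx_{k+1}}{\sum_{k=0}^tw_k}$, $g_t\sim\mathcal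 O(\bar x_t)$, $y_{t+1}=\Pi_{\mathcal K}(y_t-\alpha_t\eta_{y,t}g_t)$. Step sizes $\eta_{x,t}=\bar r_t/\sqrt{\Gamma^x_t}$, $\eta_{y,t}=\bar r_t/\sqrt{\Gamma^y_t}$ with $0<\Gamma^x_0\le\Gamma^y_0\le\Gamma^x_1\le\Gamma^y_1\le\cdots$. *)

(* Defs.v *)
From HB Require Import structures.
From mathcomp Require Import all_boot all_order all_algebra.
From mathcomp Require Import all_classical all_reals all_analysis.
Set Implicit Arguments. Unset Strict Implicit. Unset Printing Implicit Defensive.
Import Order.TTheory GRing.Theory Num.Theory.
Import numFieldNormedType.Exports.
Local Open Scope classical_set_scope.
Local Open Scope ring_scope.

Section UDoG.
Variables (R : realType) (n : nat).
Notation vec := 'rV[R]_n.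

Definition dotv (u v : vec) : R := \sum_(i < n) u 0 i * v 0 i.
Definition enorm (u : vec) : R := Num.sqrt (dotv u u).

Definition convex_setK (K : set vec) : Prop :=
  forall u v, K u -> K v -> forall l : R, 0 <= l <= 1 -> K (l *: u + (1 - l) *: v).

Definition convex_fun_on (K : set vec) (f : vec -> R) : Prop :=
  forall u v, K u -> K v -> forall l : R, 0 <= l <= 1 ->
    f (l *: u + (1 - l) *: v) <= l * f u + (1 - l) * f v.

Definition is_proj (K : set vec) (z p : vec) : Prop :=
  K p /\ forall q, K q -> enorm (z - p) <= enorm (z - q).

Definition rbar (x0 : vec) (r_eps : R) (x y : nat -> vec) (t : nat) : R :=
  \big[Num.max/r_eps]_(k < t.+1) Num.max (enorm (y k - x0)) (enorm (x k - x0)).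

Definition alpha (x0 : vec) (r_eps : R) (x y : nat -> vec) (t : nat) : R :=
  (\sum_(k < t.+1) rbar x0 r_eps x y k) / rbar x0 r_eps x y t.

Definition weight (x0 : vec) (r_eps : R) (x y : nat -> vec) (t : nat) : R :=
  alpha x0 r_eps x y t * rbar x0 r_eps x y t.

Definition zbar (x0 : vec) (r_eps : R) (x y : nat -> vec) (t : nat) : vec :=
  (\sum_(k < t.+1) weight x0 r_eps x y k)^-1 *:
    (weight x0 r_eps x y t *: y t + \sum_(k < t) weight x0 r_eps x y k *: x k.+1).

Definition xbar (x0 : vec) (r_eps : R) (x y : nat -> vec) (t : nat) : vec :=
  (\sum_(k < t.+1) weight x0 r_eps x y k)^-1 *:
    (\sum_(k < t.+1) weight x0 r_eps x y k *: x k.+1).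

(* The UDoG template, with arbitrary oracle outputs m t (at zbar t) and g t (at xbar t). *)
Definition udog_run (K : set vec) (x0 : vec) (r_eps : R) (Gx Gy : nat -> R)
    (x y m g : nat -> vec) : Prop :=
  x 0 = x0 /\ y 0 = x0 /\
  forall t,
    is_proj K (y t - (alpha x0 r_eps x y t * (rbar x0 r_eps x y t / Num.sqrt (Gx t))) *: m t)
      (x t.+1) /\
    is_proj K (y t - (alpha x0 r_eps x y t * (rbar x0 r_eps x y t / Num.sqrt (Gy t))) *: g t)
      (y t.+1).

End UDoG.

(* Main.v *)
Require Import Defs.
From HB Require Import structures.
From mathcomp Require Import all_boot all_order all_algebra.
From mathcomp Require Import all_classical all_reals all_analysis.
From mathcomp Require Import ring lra.
Import Order.TTheory GRing.Theory Num.Theory.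
Import numFieldNormedType.Exports.
Local Open Scope classical_set_scope.
Local Open Scope ring_scope.

Section L.
Variables (R : realType) (n : nat).
Implicit Types (u v w : 'rV[R]_n).

Lemma dotvC u v : dotv u v = dotv v u.
Proof. by rewrite /dotv; apply: eq_bigr => i _; rewrite mulrC. Qed.
Lemma dotvDl u v w : dotv (u + v) w = dotv u w + dotv v w.
Proof. by rewrite /dotv -big_split; apply: eq_bigr => i _; rewrite mxE mulrDl. Qed.
Lemma dotvZl a u w : dotv (a *: u) w = a * dotv u w.
Proof. by rewrite /dotv mulr_sumr; apply: eq_bigr => i _; rewrite mxE mulrA. Qed.
Lemma dotvNl u w : dotv (- u) w = - dotv u w.
Proof. by rewrite -scaleN1r dotvZl mulN1r. Qed.
Lemma dotvBl u v w : dotv (u - v) w = dotv u w - dotv v w.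
Proof. by rewrite dotvDl dotvNl. Qed.
Lemma dotvDr u v w : dotv w (u + v) = dotv w u + dotv w v.
Proof. by rewrite dotvC dotvDl !(dotvC w). Qed.
Lemma dotvZr a u w : dotv w (a *: u) = a * dotv w u.
Proof. by rewrite dotvC dotvZl (dotvC w). Qed.
Lemma dotvBr u v w : dotv w (u - v) = dotv w u - dotv w v.
Proof. by rewrite dotvC dotvBl !(dotvC w). Qed.
Lemma dotvNr u w : dotv w (- u) = - dotv w u.
Proof. by rewrite dotvC dotvNl dotvC. Qed.
Lemma dotv_ge0 u : 0 <= dotv u u.
Proof. by rewrite /dotv; apply: sumr_ge0 => i _; rewrite -expr2 sqr_ge0. Qed.
Lemma enorm_sq u : enorm u ^+ 2 = dotv u u.
Proof. by rewrite /enorm sqr_sqrtr // dotv_ge0. Qed.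

Lemma dotv_sub u v : dotv (u - v) (u - v) = dotv u u - 2 * dotv u v + dotv v v.
Proof. rewrite dotvBl !dotvBr (dotvC v u); ring. Qed.

Lemma proj_vi (K : set 'rV[R]_n) z p q : convex_setK K -> is_proj K z p -> K q ->
  dotv (z - p) (q - p) <= 0.
Proof.
move=> cK [Kp Hp] Kq.
set a := dotv (z - p) (q - p); set b := dotv (q - p) (q - p).
have key : forall l, 0 < l <= 1 -> 0 <= - 2 * l * a + l ^+ 2 * b.
  move=> l /andP[l0 l1].
  have Kw : K (l *: q + (1 - l) *: p) by apply: cK => //; rewrite (ltW l0) l1.
  have := Hp _ Kw.
  have -> : z - (l *: q + (1 - l) *: p) = (z - p) - l *: (q - p).
    by apply/rowP => i; rewrite !mxE; ring.
  move=> H.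
  have H2 : enorm (z - p) ^+ 2 <= enorm (z - p - l *: (q - p)) ^+ 2.
    by rewrite lerXn2r // ?nnegrE /enorm sqrtr_ge0.
  move: H2; rewrite !enorm_sq.
  rewrite (dotv_sub (z - p) (l *: (q - p))) !dotvZl !dotvZr -/a -/b => H2; lra.
rewrite leNgt; apply/negP => a0.
have b0 : 0 <= b by apply: dotv_ge0.
have ab0 : 0 < a + b by lra.
set l := a / (a + b).
have hl : l * (a + b) = a by rewrite /l divfK // gt_eqF.
have l0 : 0 < l by rewrite /l divr_gt0.
have l1 : l <= 1 by rewrite /l ler_pdivrMr // mul1r; lra.
have := key l; rewrite l0 l1 => /(_ isT) H.
have : l * (- 2 * a + l * b) < 0.
  rewrite pmulr_rlt0 //; nra.
nra.
Qed.

Arguments proj_vi {K z p q}.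

Lemma proj_step (K : set 'rV[R]_n) z v p q (a r S : R) : convex_setK K -> 0 < S ->
  is_proj K (z - (a * (r / S)) *: v) p -> K q ->
  a * r * dotv v (p - q) <=
    S / 2 * (enorm (z - q) ^+ 2 - enorm (z - p) ^+ 2 - enorm (p - q) ^+ 2).
Proof.
move=> cK S0 Hp Kq.
have := proj_vi cK Hp Kq.
set c := a * (r / S).
have -> : z - c *: v - p = (z - p) - c *: v by apply/rowP => i; rewrite !mxE; ring.
have -> : z - q = (z - p) - (q - p) by apply/rowP => i; rewrite !mxE; ring.
have -> : p - q = - (q - p) by apply/rowP => i; rewrite !mxE; ring.
rewrite !enorm_sq dotvBl dotvZl dotv_sub dotvNr.
have -> : dotv (- (q - p)) (- (q - p)) = dotv (q - p) (q - p).
  by rewrite dotvNl dotvNr opprK.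
have hc : S * c = a * r by rewrite /c; field; rewrite gt_eqF.
set U := dotv (z - p) (q - p); set V := dotv v (q - p).
move=> H.
have H1 : S * (U - c * V) <= 0 by rewrite pmulr_rle0.
have : S * U <= a * r * V by rewrite -hc; lra.
lra.
Qed.
Lemma young (c rho : R) u v : 0 < rho ->
  c * dotv u v <= c ^+ 2 * rho / 2 * (enorm u ^+ 2) + (2 * rho)^-1 * enorm v ^+ 2.
Proof.
move=> r0; rewrite !enorm_sq.
have := dotv_ge0 ((rho * c) *: u - v).
rewrite dotv_sub !dotvZl !dotvZr => H.
set A := dotv u u in H *; set B := dotv u v in H *; set C := dotv v v in H *.
rewrite -subr_ge0.
have -> : c ^+ 2 * rho / 2 * A + (2 * rho)^-1 * C - c * B =
  (2 * rho)^-1 * (rho * c * (rho * c * A) - 2 * (rho * c * B) + C).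
  by field; rewrite gt_eqF.
apply: mulr_ge0 => //; first by rewrite invr_ge0; lra.
Qed.
End L.
Arguments proj_step {R n K z v p q a r S}.
Arguments young {R n}.
Arguments dotv_ge0 {R n}.
Arguments enorm_sq {R n}.



Theorem lemma16 (R : realType) (n : nat) (K : set 'rV[R]_n) (f : 'rV[R]_n -> R)
  (xstar x0 : 'rV[R]_n) (r_eps : R) (Gx Gy : nat -> R) (x y m g : nat -> 'rV[R]_n) :
  closed K -> convex_setK K -> convex_fun_on K f ->
  K xstar -> (forall u, K u -> f xstar <= f u) ->
  K x0 -> 0 < r_eps ->
  0 < Gx 0%N -> (forall t, Gx t <= Gy t) -> (forall t, Gy t <= Gx t.+1) ->
  udog_run K x0 r_eps Gx Gy x y m g ->
  forall (t : nat) (rho : R), 0 < rho ->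
  let rb := rbar x0 r_eps x y t in
  let al := alpha x0 r_eps x y t in
  rb * al * dotv (g t) (x t.+1 - xstar) <=
    rb ^+ 2 * al ^+ 2 * rho / 2 * enorm (g t - m t) ^+ 2
    - (2 * rho)^-1 * enorm (x t.+1 - y t) ^+ 2
    + ((2 * rho)^-1 - Num.sqrt (Gx t) / 2)
        * (enorm (x t.+1 - y t) ^+ 2 + enorm (x t.+1 - y t.+1) ^+ 2)
    + Num.sqrt (Gy t) / 2 * (enorm (y t - xstar) ^+ 2 - enorm (y t.+1 - xstar) ^+ 2).
Proof.
move=> _ cK _ Ks _ Kx0 _ G0 Gxy Gyx [_ [y0 Hrun]] t rho r0.
cbv zeta.
set rb := rbar x0 r_eps x y t; set al := alpha x0 r_eps x y t.
have Gxp : forall k, 0 < Gx k.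
  elim=> [//|k IH]; apply: (lt_le_trans IH); exact: le_trans (Gxy k) (Gyx k).
have Gyp : 0 < Gy t by apply: lt_le_trans (Gxy t).
have sx : 0 < Num.sqrt (Gx t) by rewrite sqrtr_gt0.
have sy : 0 < Num.sqrt (Gy t) by rewrite sqrtr_gt0.
have sxy : Num.sqrt (Gx t) <= Num.sqrt (Gy t) by apply: ler_wsqrtr.
have [Hx Hy] := Hrun t.
have Ky' : K (y t.+1) by case: Hy.
have h1 := proj_step cK sx Hx Ky'.
have h2 := proj_step cK sy Hy Ks.
have h3 := young (al * rb) rho (g t - m t) (x t.+1 - y t.+1) r0.
have dec : dotv (g t) (x t.+1 - xstar) =
   dotv (g t - m t) (x t.+1 - y t.+1) + dotv (m t) (x t.+1 - y t.+1)
   + dotv (g t) (y t.+1 - xstar).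
  have -> : x t.+1 - xstar = (x t.+1 - y t.+1) + (y t.+1 - xstar).
    by apply/rowP => i; rewrite !mxE; ring.
  rewrite dotvDr dotvBl; ring.
have hn : 0 <= enorm (y t - y t.+1) ^+ 2 by rewrite enorm_sq dotv_ge0.
have hp : 0 <= (Num.sqrt (Gy t) - Num.sqrt (Gx t)) * enorm (y t - y t.+1) ^+ 2.
  by apply: mulr_ge0 => //; lra.
have ex : enorm (y t - x t.+1) = enorm (x t.+1 - y t).
  by rewrite /enorm -(opprB (x t.+1)) dotvNl dotvNr opprK.
rewrite ex in h1.
rewrite dec.
move: h1 h2 h3 hp.
rewrite -/rb -/al.
move=> h1 h2 h3 hp.
lra.
Qed.
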